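(* Let $T$ be a contraction on a Hilbert space such that $1-TT^*$ has finite rank. Then the limit $\lim_{n\to\infty} \frac{1}{n}\operatorname{tr}(1 - T^n {T^*}^n)$ exists and $$\lim_{n\to\infty} \frac{\operatorname{tr}(1 - T^n {T^*}^n)}{n} = \lim_{n\to\infty} \operatorname{tr}\big({T^*}^n T^n (1-TT^* )\big),$$ the limit on the right also existing (the sequence $\operatorname{tr}({T^*}^n T^n(1-TT^* ))$ being non-increasing and non-negative). *)

(* Defs.v *)
From HB Require Import structures.
From mathcomp Require Import all_boot all_order all_algebra.
From mathcomp Require Import all_classical all_reals.
From mathcomp Require Import topology normedtype sequences.
From mathcomp Require Import complex.
Set Implicit Arguments.
Unset Strict Implicit.
Unset Printing Implicit Defensive.
Import Order.TTheory GRing.Theory Num.Theory.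
Local Open Scope ring_scope.

Section Hilbert.
Variable R : realType.
Local Notation C := R[i].
Variable V : lmodType C.
Variable ip : V -> V -> C.

Definition inner_product_axioms : Prop :=
  [/\ (forall a x y z, ip (a *: x + y) z = a * ip x z + ip y z),
      (forall x y, ip y x = Num.conj (ip x y)),
      (forall x, 0 <= ip x x) &
      (forall x, ip x x = 0 -> x = 0)].

Definition hnorm (x : V) : R := Num.sqrt (complex.Re (ip x x)).

Definition hcomplete : Prop :=
  forall u : nat -> V,
    (forall e : R, 0 < e -> exists N, forall m n, (N <= m)%N -> (N <= n)%N ->
        hnorm (u m - u n) < e) ->
    exists l : V, forall e : R, 0 < e -> exists N, forall n, (N <= n)%N ->
        hnorm (u n - l) < e.

Definition hilbert_space : Prop := inner_product_axioms /\ hcomplete.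

Definition his_adjoint (T Ts : V -> V) : Prop :=
  forall x y, ip (T x) y = ip x (Ts y).

Definition hcontraction (T : V -> V) : Prop := forall x, hnorm (T x) <= hnorm x.

Definition hin_span (e : seq V) (x : V) : Prop :=
  exists c : seq C, size c = size e /\
    x = \sum_(i < size e) c`_i *: e`_i.

Definition horthonormal (e : seq V) : Prop :=
  forall i j, (i < size e)%N -> (j < size e)%N ->
    ip e`_i e`_j = (i == j)%:R.

Definition hfinite_rank (F : V -> V) : Prop :=
  exists e : seq V, forall x, hin_span e (F x).

Definition ftrace_is (F : V -> V) (t : C) : Prop :=
  exists e : seq V, [/\ horthonormal e, (forall x, hin_span e (F x)) &
     t = \sum_(i < size e) ip (F e`_i) e`_i].

(* the ftrace of a finite-rank operator (well defined: independent of the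
   horthonormal family chosen); 0 by convention otherwise *)
Definition ftrace (F : V -> V) : C := xget 0 (ftrace_is F).

End Hilbert.

(* Main.v *)
Require Import Defs.
From HB Require Import structures.
From mathcomp Require Import all_boot all_order all_algebra.
From mathcomp Require Import all_classical all_reals.
From mathcomp Require Import topology normedtype sequences.
From mathcomp Require Import complex.
From mathcomp.algebra_tactics Require Import ring lra.
Import Order.TTheory GRing.Theory Num.Theory.
Import numFieldNormedType.Exports.
Local Open Scope ring_scope.
Local Open Scope complex_scope.
Local Open Scope classical_set_scope.
Lemma conjR {R : realType} (x : R) : Num.conj (x%:C) = x%:C.
Proof. exact: conjc_real. Qed.
Lemma ge0R {R : realType} {z : R[i]} : 0 <= z -> z = (complex.Re z)%:C.
Proof. move=> h; rewrite {1}[z]complexE (ger0_Im h) mulr0 addr0 //. Qed.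
Lemma ge0Re {R : realType} {z : R[i]} : 0 <= z -> 0 <= complex.Re z.
Proof. by move=> h; rewrite -ler0c -ge0R. Qed.

Lemma cjD {R : realType} (x y : R[i]) : Num.conj (x + y) = Num.conj x + Num.conj y.
Proof. exact: rmorphD. Qed.
Lemma cjB {R : realType} (x y : R[i]) : Num.conj (x - y) = Num.conj x - Num.conj y.
Proof. exact: rmorphB. Qed.
Lemma cjN {R : realType} (x : R[i]) : Num.conj (- x) = - Num.conj x.
Proof. exact: rmorphN. Qed.
Lemma cjM {R : realType} (x y : R[i]) : Num.conj (x * y) = Num.conj x * Num.conj y.
Proof. exact: rmorphM. Qed.
Lemma cjV {R : realType} (x : R[i]) : Num.conj (x^-1) = (Num.conj x)^-1.
Proof. exact: fmorphV. Qed.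
Lemma cjK {R : realType} (x : R[i]) : Num.conj (Num.conj x) = x.
Proof. exact: conjCK. Qed.

Lemma analysis_part {R : realType} (a : nat -> R[i]) :
  (forall n, 0 <= a n) -> (forall n, a n.+1 <= a n) ->
  exists L : R, (fun n => complex.Re (a n)) @ \oo --> L /\
     (fun n : nat => complex.Re (\sum_(0 <= k < n) a k) / n%:R) @ \oo --> L.
Proof.
move=> a0 adec; set r := fun n => complex.Re (a n).
have rdec : nonincreasing_seq r.
  apply/nonincreasing_seqP => n; have := adec n; rewrite lecE => /andP[_].
  by [].
have rlb : has_lbound (range r).
  by exists 0 => _ [n _ <-]; rewrite /r ge0Re.
have hr := nonincreasing_cvgn rdec rlb.
exists (inf (r @` setT)); split=> //.
rewrite -cvg_shiftS.
suff -> : [sequence complex.Re (\sum_(0 <= k < n.+1) a k) / n.+1%:R]_n = arithmetic_mean r.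
  exact: cesaro.
apply/funext => n; rewrite /arithmetic_mean /series /= mulrC; congr (_ * _).
by rewrite raddf_sum.
Qed.

Section H.
Variable R : realType.
Local Notation C := R[i].
Variable V : lmodType C.
Variable ip : V -> V -> C.
Hypothesis ipDZ : forall a x y z, ip (a *: x + y) z = a * ip x z + ip y z.
Hypothesis ipC : forall x y, ip y x = Num.conj (ip x y).
Hypothesis ip_ge0 : forall x, 0 <= ip x x.
Hypothesis ip_eq0 : forall x, ip x x = 0 -> x = 0.


Lemma ipDl x y z : ip (x + y) z = ip x z + ip y z.
Proof. by rewrite -{1}(scale1r x) ipDZ mul1r. Qed.
Lemma ip0l z : ip 0 z = 0.
Proof. have h := ipDl 0 0 z; rewrite addr0 in h.
by apply: (addrI (ip 0 z)); rewrite addr0 -h. Qed.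
Lemma ipZl a x z : ip (a *: x) z = a * ip x z.
Proof. by rewrite -(addr0 (a *: x)) ipDZ ip0l addr0. Qed.
Lemma ipNl x z : ip (- x) z = - ip x z.
Proof. by rewrite -scaleN1r ipZl mulN1r. Qed.
Lemma ipBl x y z : ip (x - y) z = ip x z - ip y z.
Proof. by rewrite ipDl ipNl. Qed.
Lemma ip_suml (I : Type) (r : seq I) (P : pred I) (F : I -> V) z :
  ip (\sum_(i <- r | P i) F i) z = \sum_(i <- r | P i) ip (F i) z.
Proof. exact: (big_morph (fun x => ip x z) (fun x y => ipDl x y z) (ip0l z)). Qed.
Lemma ipDr x y z : ip z (x + y) = ip z x + ip z y.
Proof. by rewrite ipC ipDl rmorphD [ip z x]ipC [ip z y]ipC. Qed.
Lemma ipZr a x z : ip z (a *: x) = Num.conj a * ip z x.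
Proof. by rewrite ipC ipZl rmorphM [ip z x]ipC. Qed.
Lemma ip0r z : ip z 0 = 0.
Proof. by rewrite ipC ip0l rmorph0. Qed.
Lemma ipNr x z : ip z (- x) = - ip z x.
Proof. by rewrite ipC ipNl rmorphN [ip z x]ipC. Qed.
Lemma ipBr x y z : ip z (x - y) = ip z x - ip z y.
Proof. by rewrite ipDr ipNr. Qed.
Lemma ip_sumr (I : Type) (r : seq I) (P : pred I) (F : I -> V) z :
  ip z (\sum_(i <- r | P i) F i) = \sum_(i <- r | P i) ip z (F i).
Proof. exact: (big_morph (fun x => ip z x) (fun x y => ipDr x y z) (ip0r z)). Qed.
Lemma ip_real x : Num.conj (ip x x) = ip x x.
Proof. by rewrite -ipC. Qed.

Definition proj (e : seq V) x := \sum_(0 <= i < size e) ip x e`_i *: e`_i.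
Definition insp e x := proj e x = x.

Lemma sum_delta (n j : nat) (c : nat -> C) : (j < n)%N ->
  \sum_(0 <= i < n) c i * (i == j)%:R = c j.
Proof.
move=> jn; rewrite big_mkord (bigD1 (Ordinal jn)) //= eqxx mulr1 big1 ?addr0 //.
by move=> i /negPf; rewrite -val_eqE /= => ->; rewrite mulr0.
Qed.

Lemma sum_delta' (n j : nat) (c : nat -> C) : (j < n)%N ->
  \sum_(0 <= i < n) (j == i)%:R * c i = c j.
Proof.
move=> jn; rewrite -(@sum_delta n j c jn); apply: eq_bigr => i _.
by rewrite mulrC eq_sym.
Qed.

Lemma ip_comb e (c : nat -> C) j : horthonormal ip e -> (j < size e)%N ->
  ip (\sum_(0 <= i < size e) c i *: e`_i) e`_j = c j.
Proof.
move=> he hj; rewrite ip_suml -(@sum_delta (size e) j c hj) big_nat_cond [RHS]big_nat_cond.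
apply: eq_bigr => i /andP[/andP[_ hi] _]; by rewrite ipZl he.
Qed.

Lemma proj_ip e x j : horthonormal ip e -> (j < size e)%N ->
  ip (proj e x) e`_j = ip x e`_j.
Proof. by move=> he hj; rewrite /proj ip_comb. Qed.

Lemma hin_spanP e x : horthonormal ip e -> hin_span e x <-> insp e x.
Proof.
move=> he; split.
  move=> [c [hc ->]]; rewrite /insp /proj -(big_mkord xpredT (fun i => c`_i *: e`_i)).
  by apply: eq_big_nat => i /andP[_ hi]; rewrite ip_comb.
move=> hx; exists (mkseq (fun i => ip x e`_i) (size e)); split; first by rewrite size_mkseq.
rewrite -{1}hx /proj big_mkord; apply: eq_bigr => i _.
by rewrite nth_mkseq.
Qed.

Lemma proj_add e x y : proj e (x + y) = proj e x + proj e y.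
Proof. by rewrite /proj -big_split /=; apply: eq_bigr => i _; rewrite ipDl scalerDl. Qed.
Lemma proj_scale e a x : proj e (a *: x) = a *: proj e x.
Proof. by rewrite /proj scaler_sumr; apply: eq_bigr => i _; rewrite ipZl scalerA. Qed.
Lemma proj0 e : proj e 0 = 0.
Proof. by rewrite /proj big1 // => i _; rewrite ip0l scale0r. Qed.
Lemma proj_sum e (I : Type) (r : seq I) (P : pred I) (F : I -> V) :
  proj e (\sum_(i <- r | P i) F i) = \sum_(i <- r | P i) proj e (F i).
Proof. exact: (big_morph (proj e) (proj_add e) (proj0 e)). Qed.

Lemma insp_add e x y : insp e x -> insp e y -> insp e (x + y).
Proof. by rewrite /insp proj_add => -> ->. Qed.
Lemma insp_scale e a x : insp e x -> insp e (a *: x).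
Proof. by rewrite /insp proj_scale => ->. Qed.
Lemma insp0 e : insp e 0.
Proof. exact: proj0. Qed.
Lemma insp_sum e (I : Type) (r : seq I) (P : pred I) (F : I -> V) :
  (forall i, P i -> insp e (F i)) -> insp e (\sum_(i <- r | P i) F i).
Proof.
move=> h; rewrite /insp proj_sum; apply: eq_bigr => i /h; exact.
Qed.

Lemma insp_e e j : horthonormal ip e -> (j < size e)%N -> insp e e`_j.
Proof.
move=> he hj; rewrite /insp /proj.
rewrite (eq_big_nat _ _ (F2 := fun i => (j == i)%:R *: e`_i)); last first.
  by move=> i /andP[_ hi]; rewrite he.
rewrite big_mkord (bigD1 (Ordinal hj)) //= eqxx scale1r big1 ?addr0 //.
by move=> i /negPf; rewrite -val_eqE /= eq_sym => ->; rewrite scale0r.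
Qed.

Lemma proj_rcons e u x : proj (rcons e u) x = proj e x + ip x u *: u.
Proof.
rewrite /proj size_rcons big_nat_recr //= nth_rcons ltnn eqxx; congr (_ + _).
by apply: eq_big_nat => i /andP[_ hi]; rewrite nth_rcons hi.
Qed.

Lemma orth_rcons e u : horthonormal ip e -> ip u u = 1 ->
  (forall j, (j < size e)%N -> ip u e`_j = 0) -> horthonormal ip (rcons e u).
Proof.
move=> he hu hue i j; rewrite size_rcons !ltnS => hi hj; rewrite !nth_rcons.
have [hi'|hi'] := boolP (i < size e)%N; have [hj'|hj'] := boolP (j < size e)%N.
- exact: he.
- have -> : j = size e by apply/eqP; rewrite eqn_leq hj leqNgt hj'.
  by rewrite eqxx ipC hue // (ltn_eqF hi') conjC0.
- have -> : i = size e by apply/eqP; rewrite eqn_leq hi leqNgt hi'.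
  by rewrite eqxx hue // (gtn_eqF hj').
- have -> : i = size e by apply/eqP; rewrite eqn_leq hi leqNgt hi'.
  have -> : j = size e by apply/eqP; rewrite eqn_leq hj leqNgt hj'.
  by rewrite eqxx hu.
Qed.
Lemma insp_rcons e u x : horthonormal ip (rcons e u) -> insp e x ->
  insp (rcons e u) x.
Proof.
move=> he hx; rewrite /insp proj_rcons.
suff -> : ip x u = 0 by rewrite scale0r addr0.
rewrite -hx /proj ip_suml big_nat_cond big1 // => i /andP[/andP[_ hi] _].
have h := he i (size e); rewrite size_rcons in h; have {h} := h (leqW hi) (ltnSn _).
by rewrite !nth_rcons hi ltnn eqxx (ltn_eqF hi) ipZl => ->; rewrite mulr0.
Qed.

Lemma horth_take e : horthonormal ip (rcons e 0) -> False.
Proof.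
move=> /(_ (size e) (size e)); rewrite size_rcons ltnS leqnn nth_rcons ltnn eqxx ip0l.
by move=> /(_ isT isT) /eqP; rewrite eq_sym oner_eq0.
Qed.

Lemma GS_step e v : horthonormal ip e -> exists e', horthonormal ip e' /\
  insp e' v /\ forall x, insp e x -> insp e' x.
Proof.
move=> he; set w := v - proj e v.
have hwe j : (j < size e)%N -> ip w e`_j = 0.
  by move=> hj; rewrite /w ipBl proj_ip // subrr.
have [w0 | wn0] := eqVneq w 0.
  exists e; split=> //; split=> //.
  by rewrite /insp; apply/eqP; rewrite eq_sym -subr_eq0 -/w w0.
set r := complex.Re (ip w w).
have hr : ip w w = r%:C by rewrite {1}(ge0R (ip_ge0 w)).
have rgt0 : 0 < r.
  rewrite lt_def ge0Re // andbT; apply/eqP => r0.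
  apply: (negP wn0); apply/eqP; apply: ip_eq0; by rewrite hr r0.
have sq : Num.sqrt r * Num.sqrt r = r by rewrite -expr2 sqr_sqrtr // ltW.
have sgt0 : 0 < Num.sqrt r by rewrite sqrtr_gt0.
set s := Num.sqrt r in sq sgt0.
set k := s^-1.
have kk : k * k * r = 1.
  by rewrite /k -sq -invfM mulVf // gt_eqF // mulr_gt0.
set u := k%:C *: w.
have huu : ip u u = 1.
  by rewrite /u ipZl ipZr conjR hr -!rmorphM /= mulrA kk.
have hue j : (j < size e)%N -> ip u e`_j = 0 by move=> hj; rewrite ipZl hwe ?mulr0.
have he' := @orth_rcons e u he huu hue.
exists (rcons e u); split=> //; split; last by move=> x; exact: insp_rcons.
rewrite /insp proj_rcons.
have : ip v u = k%:C * r%:C.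
  rewrite ipZr conjR; congr (_ * _).
  rewrite -{1}(subrK (proj e v) v) -/w ipDl hr /proj ip_suml big_nat_cond big1 ?addr0 //.
  by move=> i /andP[/andP[_ hi] _]; rewrite ipZl [ip e`_i w]ipC hwe // conjC0 mulr0.
move=> ->; rewrite /u scalerA -!rmorphM /= mulrC mulrA kk scale1r /w.
by rewrite addrC subrK.
Qed.

Lemma GS (s : seq V) : exists e, horthonormal ip e /\ forall v, v \in s -> insp e v.
Proof.
elim: s => [|v s [e [he hs]]].
  by exists [::]; split => // i j.
have [e' [he' [hv hsub]]] := @GS_step e v he.
exists e'; split=> // x; rewrite inE => /orP[/eqP -> // | /hs]; exact: hsub.
Qed.

Definition rep n (a b : nat -> V) x := \sum_(0 <= k < n) ip x (a k) *: b k.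
Definition tr (e : seq V) (F : V -> V) := \sum_(0 <= i < size e) ip (F e`_i) e`_i.

Lemma ip_proj_sym f x y : insp f y -> ip x y = ip (proj f x) y.
Proof.
move=> hy; rewrite -{1}hy /proj ip_sumr ip_suml; apply: eq_bigr => l _.
by rewrite ipZr ipZl -ipC mulrC.
Qed.

Lemma rep_lin n a b (c : nat -> C) (g : nat -> V) m :
  rep n a b (\sum_(0 <= l < m) c l *: g l) = \sum_(0 <= l < m) c l *: rep n a b (g l).
Proof.
rewrite /rep.
under eq_bigr do rewrite ip_suml scaler_suml.
rewrite exchange_big /=; apply: eq_bigr => l _.
by rewrite scaler_sumr; apply: eq_bigr => k _; rewrite ipZl scalerA.
Qed.

Lemma rep_proj n a b f x : horthonormal ip f ->
  (forall k, (k < n)%N -> insp f (a k)) ->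
  rep n a b x = rep n a b (proj f x).
Proof.
move=> hf ha; rewrite /rep big_nat_cond [RHS]big_nat_cond; apply: eq_bigr => k.
by case/andP=> /andP[_ hk] _; rewrite (@ip_proj_sym f _ _ (ha k hk)).
Qed.

Lemma TR e f n a b F : horthonormal ip e -> (forall x, insp e (F x)) ->
  (forall x, F x = rep n a b x) -> horthonormal ip f ->
  (forall k, (k < n)%N -> insp f (a k)) ->
  tr e F = \sum_(0 <= k < n) ip (b k) (a k).
Proof.
move=> he heF hF hf ha.
have step1 : tr e F = \sum_(0 <= l < size f) ip (F f`_l) f`_l.
  rewrite /tr.
  transitivity (\sum_(0 <= i < size e) \sum_(0 <= l < size f)
                   ip (F f`_l) e`_i * ip e`_i f`_l).
    apply: eq_bigr => i _; rewrite hF (@rep_proj n a b f _ hf ha) /proj rep_lin ip_suml.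
    by apply: eq_bigr => l _; rewrite ipZl -hF mulrC.
  rewrite exchange_big /=; apply: eq_bigr => l _.
  rewrite -{2}(heF f`_l) /proj ip_suml; apply: eq_bigr => i _.
  by rewrite ipZl.
rewrite step1.
transitivity (\sum_(0 <= l < size f) \sum_(0 <= k < n) ip f`_l (a k) * ip (b k) f`_l).
  apply: eq_bigr => l _; rewrite hF /rep ip_suml; apply: eq_bigr => k _.
  by rewrite ipZl.
rewrite exchange_big /= big_nat_cond [RHS]big_nat_cond; apply: eq_bigr => k.
case/andP=> /andP[_ hk] _.
rewrite (@ip_proj_sym f _ _ (ha k hk)) /proj ip_suml; apply: eq_bigr => l _.
by rewrite ipZl mulrC.
Qed.

Lemma CS0 (G : V -> V) g x :
  (forall a x y, G (a *: x + y) = a *: G x + G y) ->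
  (forall x y, ip (G x) y = ip x (G y)) ->
  (forall x, 0 <= ip (G x) x) -> ip (G g) g != 0 ->
  0 <= ip (G x) x - ip (G x) g * Num.conj (ip (G x) g) / ip (G g) g.
Proof.
move=> GL GS Gp c0.
set c := ip (G g) g in c0 *; set al := ip (G x) g.
have cc : Num.conj c = c by rewrite /c -ipC -GS.
have h1 : ip (G g) x = Num.conj al by rewrite GS ipC.
set t := al / c.
have ct : Num.conj t = Num.conj al / c by rewrite cjM cjV cc.
have := Gp ((- t) *: g + x); rewrite GL !ipDZ !ipDr !ipZr h1 -/c -/al.
rewrite cjN ct /t.
move=> h; apply: le_trans h _; rewrite le_eqVlt; apply/orP; left; apply/eqP.
by field.
Qed.

Lemma proj_cons g f y : proj (g :: f) y = ip y g *: g + proj f y.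
Proof. by rewrite /proj /= big_nat_recl. Qed.

Lemma horth_cons g f : horthonormal ip (g :: f) -> horthonormal ip f.
Proof. by move=> h i j hi hj; exact: (h i.+1 j.+1). Qed.

Lemma insp_cons_tail g f y : insp (g :: f) y -> ip y g = 0 -> insp f y.
Proof. by rewrite /insp proj_cons => h h0; rewrite h0 scale0r add0r in h. Qed.

Lemma G_zero (G : V -> V) g :
  (forall a x y, G (a *: x + y) = a *: G x + G y) ->
  (forall x y, ip (G x) y = ip x (G y)) ->
  (forall x, 0 <= ip (G x) x) -> ip (G g) g = 0 -> G g = 0.
Proof.
move=> GL GS Gp c0; set y := G g; apply: ip_eq0; set a := ip y y.
have a0 : 0 <= a by exact: ip_ge0.
have hgy : ip (G g) y = a by [].
have hyg : ip (G y) g = a by rewrite GS.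
have [cy | cy] := eqVneq (ip (G y) y) 0.
  have := Gp ((-1) *: y + g); rewrite GL !ipDZ !ipDr !ipZr hgy hyg c0 cy.
  rewrite cjN conjC1 mulr0 add0r addr0 !mulN1r -opprD oppr_ge0 => h.
  apply/le_anti; rewrite a0 andbT; apply: le_trans h; rewrite lerDl //.
have := @CS0 G y g GL GS Gp cy; rewrite c0 hgy ip_real add0r oppr_ge0 => h.
have h2 : 0 <= a * a / ip (G y) y by rewrite mulr_ge0 ?invr_ge0 ?mulr_ge0.
have : a * a / ip (G y) y = 0 by apply/le_anti; rewrite h h2.
by move/eqP; rewrite mulf_eq0 invr_eq0 (negPf cy) orbF mulf_eq0 orbb => /eqP.
Qed.

Lemma rep_snoc m u u0 x :
  rep m.+1 (fun k => if (k < m)%N then u k else u0)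
           (fun k => if (k < m)%N then u k else u0) x = rep m u u x + ip x u0 *: u0.
Proof.
rewrite /rep big_nat_recr //= ltnn; congr (_ + _).
by apply: eq_big_nat => k /andP[_ ->].
Qed.

Lemma chol (f : seq V) : forall G : V -> V, horthonormal ip f ->
  (forall a x y, G (a *: x + y) = a *: G x + G y) ->
  (forall x y, ip (G x) y = ip x (G y)) ->
  (forall x, 0 <= ip (G x) x) -> (forall x, insp f (G x)) ->
  exists m u, forall x, G x = rep m u u x.
Proof.
elim: f => [|g f IH] G hf GL GS Gp Gf.
  exists 0%N, (fun _ => 0) => x; rewrite /rep big_geq //.
  by rewrite -(Gf x) /proj big_geq.
have hf' := @horth_cons _ _ hf.
have [c0 | c0] := eqVneq (ip (G g) g) 0.
  have Gg0 := @G_zero G g GL GS Gp c0.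
  apply: IH => // x; apply: (@insp_cons_tail g f _ (Gf x)).
  by rewrite GS Gg0 ip0r.
set c := ip (G g) g in c0.
set r := complex.Re c.
have hc : c = r%:C by exact: (ge0R (Gp g)).
have rgt0 : 0 < r.
  rewrite lt_def ge0Re ?Gp // andbT; apply/eqP => r0.
  by move: c0; rewrite hc r0 eqxx.
have sq : Num.sqrt r * Num.sqrt r = r by rewrite -expr2 sqr_sqrtr // ltW.
have sgt0 : 0 < Num.sqrt r by rewrite sqrtr_gt0.
set s := Num.sqrt r in sq sgt0.
set k := s^-1.
have kk : k * k * r = 1.
  by rewrite /k -sq -invfM mulVf // gt_eqF // mulr_gt0.
have kr : k * k = r^-1 by rewrite -(mulfK (negbT (gt_eqF rgt0)) (k*k)) kk mul1r.
have kkC : k%:C * k%:C = c^-1 by rewrite hc -fmorphV -kr rmorphM.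
set u0 := k%:C *: G g.
set G' := fun x => G x - ip x u0 *: u0.
have G'L : forall a x y, G' (a *: x + y) = a *: G' x + G' y.
  move=> a x y; rewrite /G' GL ipDZ scalerDl scalerBr -scalerA.
  by rewrite opprD !addrA; congr (_ + _); rewrite -!addrA; congr (_ + _); rewrite addrC.
have G'S : forall x y, ip (G' x) y = ip x (G' y).
  move=> x y; rewrite /G' ipBl ipBr (ipZl (ip x u0)) (ipZr (ip y u0)) GS; congr (_ - _).
  by rewrite -ipC mulrC.
have hxu x : ip x u0 = k%:C * ip (G x) g by rewrite ipZr conjR -GS.
have hux x : ip u0 x = k%:C * Num.conj (ip (G x) g) by rewrite ipZl GS ipC.
have G'p : forall x, 0 <= ip (G' x) x.
  move=> x; rewrite /G' ipBl ipZl hxu hux.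
  have := @CS0 G g x GL GS Gp c0; rewrite -/c.
  by congr (0 <= _ - _); rewrite mulrACA kkC mulrC.
have G'g : G' g = 0.
  rewrite /G' hxu -/c /u0 scalerA (_ : k%:C * c * k%:C = 1) ?scale1r ?subrr //.
  by rewrite mulrAC kkC mulVf.
have G'f : forall x, insp f (G' x).
  move=> x; apply: (@insp_cons_tail g f); last by move: (G'S x g); rewrite G'g ip0r.
  rewrite /G' -scaleNr; apply: insp_add; first exact: Gf.
  do 2 apply: insp_scale.
  exact: Gf.
have [m [u hu]] := IH G' hf' G'L G'S G'p G'f.
exists m.+1, (fun j => if (j < m)%N then u j else u0) => x.
by rewrite rep_snoc -hu /G' subrK.
Qed.

Lemma ftrace_rep F n a b : (forall x, F x = rep n a b x) ->
  ftrace ip F = \sum_(0 <= k < n) ip (b k) (a k).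
Proof.
move=> hF.
have [e [he heb]] := GS [seq b k | k <- iota 0 n].
have [f [hf hfa]] := GS [seq a k | k <- iota 0 n].
have ha k : (k < n)%N -> insp f (a k).
  by move=> hk; apply: hfa; apply/mapP; exists k => //; rewrite mem_iota.
have heF x : insp e (F x).
  rewrite hF /rep big_nat_cond; apply: insp_sum => k /andP[/andP[_ hk] _].
  by apply: insp_scale; apply: heb; apply/mapP; exists k => //; rewrite mem_iota.
rewrite /ftrace; apply: xget_unique.
  exists e; split=> //; first by move=> x; apply/(hin_spanP _ _ he).
  by rewrite -(@TR e f n a b F he heF hF hf ha) /tr big_mkord.
move=> t [e' [he' hsp ->]].
rewrite -(@TR e' f n a b F he' _ hF hf ha) ?/tr ?big_mkord // => x.
exact/(hin_spanP _ _ he').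
Qed.

Lemma ip_ext x y : (forall z, ip x z = ip y z) -> x = y.
Proof.
move=> h; apply/eqP; rewrite -subr_eq0; apply/eqP/ip_eq0.
by rewrite ipBl h subrr.
Qed.

Lemma lin_add {G : V -> V} : (forall a u v, G (a *: u + v) = a *: G u + G v) ->
  forall u v, G (u + v) = G u + G v.
Proof. by move=> GL u v; rewrite -(scale1r u) GL !scale1r. Qed.

Lemma lin0 {G : V -> V} : (forall a u v, G (a *: u + v) = a *: G u + G v) -> G 0 = 0.
Proof.
move=> GL; have := lin_add GL 0 0; rewrite addr0 => h.
by apply: (addrI (G 0)); rewrite addr0 -h.
Qed.

Lemma lin_scale {G : V -> V} : (forall a u v, G (a *: u + v) = a *: G u + G v) ->
  forall a u, G (a *: u) = a *: G u.
Proof. by move=> GL a u; rewrite -(addr0 (a *: u)) GL (lin0 GL) addr0. Qed.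

Lemma lin_sub {G : V -> V} : (forall a u v, G (a *: u + v) = a *: G u + G v) ->
  forall u v, G (u - v) = G u - G v.
Proof. by move=> GL u v; rewrite (lin_add GL) -scaleN1r (lin_scale GL) scaleN1r. Qed.

Lemma lin_sum {G : V -> V} : (forall a u v, G (a *: u + v) = a *: G u + G v) ->
  forall (I : Type) (r : seq I) (P : pred I) (F : I -> V),
  G (\sum_(i <- r | P i) F i) = \sum_(i <- r | P i) G (F i).
Proof. by move=> GL I r P F; apply: (big_morph G (lin_add GL) (lin0 GL)). Qed.

Lemma iter_lin {G : V -> V} : (forall a u v, G (a *: u + v) = a *: G u + G v) ->
  forall n a u v, iter n G (a *: u + v) = a *: iter n G u + iter n G v.
Proof. by move=> GL; elim=> [//|n IH] a u v; rewrite /= IH GL. Qed.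

Section Op.
Variables T Ts : V -> V.
Hypothesis TL : forall a u v, T (a *: u + v) = a *: T u + T v.
Hypothesis adj : forall x y, ip (T x) y = ip x (Ts y).
Hypothesis contr : forall x, ip (T x) (T x) <= ip x x.

Lemma adj' x y : ip (Ts x) y = ip x (T y).
Proof. by rewrite ipC -adj -ipC. Qed.

Lemma TsL a u v : Ts (a *: u + v) = a *: Ts u + Ts v.
Proof. by apply: ip_ext => z; rewrite adj' !ipDZ !adj'. Qed.

Lemma adj_iter k x y : ip (iter k Ts x) y = ip x (iter k T y).
Proof.
elim: k y => [//|k IH] y; by rewrite iterS adj' IH -iterSr.
Qed.

Lemma contr_Ts x : ip (Ts x) (Ts x) <= ip x x.
Proof.
set y := Ts x; set s := ip y y.
have hs : ip (T y) x = s by rewrite adj.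
have s0 : 0 <= s by exact: ip_ge0.
have [Ty0 | Tyn0] := eqVneq (ip (T y) (T y)) 0.
  have : T y = 0 by exact: ip_eq0.
  by move=> h; rewrite -hs h ip0l ip_ge0.
have idL : forall (a : C) (u v : V), id (a *: u + v) = a *: id u + id v by [].
have := @CS0 id (T y) x idL (fun _ _ => erefl) ip_ge0 Tyn0.
rewrite /= (ipC (T y) x) hs cjK ip_real subr_ge0 => h.
have [s00 | sn0] := eqVneq s 0; first by rewrite s00 ip_ge0.
have cpos : 0 < ip (T y) (T y) by rewrite lt_def Tyn0 ip_ge0.
have spos : 0 < s by rewrite lt_def sn0 s0.
apply: (le_trans _ h); rewrite -{1}(mulfK (negbT (gt_eqF spos)) s).
apply: ler_wpM2l; first by rewrite mulr_ge0.
rewrite lef_pV2 ?posrE //; exact: contr.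
Qed.

Definition D x := x - T (Ts x).

Lemma DL a u v : D (a *: u + v) = a *: D u + D v.
Proof.
rewrite /D TsL TL scalerBr opprD addrACA //.
Qed.

Lemma DS x y : ip (D x) y = ip x (D y).
Proof. by rewrite /D ipBl ipBr adj -adj'. Qed.

Lemma Dp x : 0 <= ip (D x) x.
Proof. by rewrite /D ipBl adj subr_ge0 contr_Ts. Qed.

Lemma tele n x : x - iter n T (iter n Ts x) = \sum_(0 <= k < n) iter k T (D (iter k Ts x)).
Proof.
elim: n => [|n IH]; first by rewrite big_geq // subrr.
rewrite big_nat_recr //= -IH /D (lin_sub (iter_lin TL n)) -iterSr -iterS.
by rewrite addrA subrK.
Qed.

Variables (m : nat) (u : nat -> V).
Hypothesis hD : forall x, D x = rep m u u x.

Definition aseq n := \sum_(0 <= j < m) ip (iter n T (u j)) (iter n T (u j)).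

Lemma ftrace_F1 n :
  ftrace ip (fun x => iter n Ts (iter n T (x - T (Ts x)))) = aseq n.
Proof.
rewrite (@ftrace_rep _ m u (fun j => iter n Ts (iter n T (u j)))).
  by apply: eq_bigr => j _; rewrite adj_iter.
move=> x; rewrite -/(D x) hD /rep (lin_sum (iter_lin TL n)) (lin_sum (iter_lin TsL n)).
by apply: eq_bigr => j _; rewrite (lin_scale (iter_lin TL n)) (lin_scale (iter_lin TsL n)).
Qed.

Lemma ftrace_F2 n :
  ftrace ip (fun x => x - iter n T (iter n Ts x)) = \sum_(0 <= k < n) aseq k.
Proof.
set L := [seq (k, j) | k <- index_iota 0 n, j <- index_iota 0 m].
set w := fun q : nat * nat => iter q.1 T (u q.2).
set A := fun i => w (nth (0%N, 0%N) L i).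
rewrite (@ftrace_rep _ (size L) A A).
  rewrite -(big_nth (0%N, 0%N) xpredT (fun q => ip (w q) (w q))) big_allpairs.
  by apply: eq_bigr.
move=> x; rewrite tele /rep.
rewrite -(big_nth (0%N, 0%N) xpredT (fun q => ip x (w q) *: w q)) big_allpairs.
apply: eq_bigr => k _; rewrite hD /rep (lin_sum (iter_lin TL k)).
apply: eq_bigr => j _; rewrite (lin_scale (iter_lin TL k)) adj_iter.
by [].
Qed.

Lemma aseq_ge0 n : 0 <= aseq n.
Proof. by apply: sumr_ge0 => j _; exact: ip_ge0. Qed.

Lemma aseq_decr n : aseq n.+1 <= aseq n.
Proof. by apply: ler_sum => j _; rewrite iterS; exact: contr. Qed.

End Op.

Lemma main_sec (T Ts : V -> V) :
  linear T ->
  his_adjoint ip T Ts ->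
  hcontraction ip T ->
  hfinite_rank (fun x => x - T (Ts x)) ->
  [/\ (forall n : nat,
         0 <= ftrace ip (fun x => iter n Ts (iter n T (x - T (Ts x))))),
      (forall n : nat,
         ftrace ip (fun x => iter n.+1 Ts (iter n.+1 T (x - T (Ts x))))
         <= ftrace ip (fun x => iter n Ts (iter n T (x - T (Ts x))))) &
      exists L : R,
        (fun n : nat =>
           complex.Re (ftrace ip (fun x => iter n Ts (iter n T (x - T (Ts x))))))
          @ \oo --> L
        /\
        (fun n : nat =>
           complex.Re (ftrace ip (fun x => x - iter n T (iter n Ts x))) / n%:R)
          @ \oo --> L].
Proof.
move=> TL adj hc [e0 he0].
have TL' a u v : T (a *: u + v) = a *: T u + T v by exact: TL.
have contrC x : ip (T x) (T x) <= ip x x.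
  have := hc x; rewrite /hnorm ler_sqrt ?ge0Re ?ip_ge0 // => h.
  by rewrite (ge0R (ip_ge0 (T x))) (ge0R (ip_ge0 x)) lecR.
have [f0 [hf0 hfe]] := GS e0.
have Df x : insp f0 (D T Ts x).
  rewrite /D; have [c [hc' ->]] := he0 x.
  apply: insp_sum => i _; apply: insp_scale; apply: hfe; exact: mem_nth.
have [m [u hu]] := @chol f0 (D T Ts) hf0 (@DL T Ts TL' adj) (@DS T Ts adj)
   (@Dp T Ts adj contrC) Df.
have F1 := @ftrace_F1 T Ts TL' adj m u hu.
have F2 := @ftrace_F2 T Ts TL' adj m u hu.
split.
- by move=> n; rewrite F1; exact: aseq_ge0.
- by move=> n; rewrite !F1; exact: aseq_decr.
have [L [h1 h2]] := @analysis_part R (aseq T m u) (@aseq_ge0 T m u) (@aseq_decr T contrC m u).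
exists L; split.
  suff -> : (fun n : nat => complex.Re (ftrace ip
     (fun x => iter n Ts (iter n T (x - T (Ts x)))))) =
     (fun n => complex.Re (aseq T m u n)) by [].
  by apply/funext => n; rewrite F1.
suff -> : (fun n : nat => complex.Re (ftrace ip
     (fun x => x - iter n T (iter n Ts x))) / n%:R) =
     (fun n : nat => complex.Re (\sum_(0 <= k < n) aseq T m u k) / n%:R) by [].
by apply/funext => n; rewrite F2.
Qed.

End H.

Local Close Scope complex_scope.

Theorem mainTheorem4 (R : realType) (V : lmodType R[i]) (ip : V -> V -> R[i])
    (T Ts : V -> V) :
  hilbert_space ip ->
  linear T ->
  his_adjoint ip T Ts ->
  hcontraction ip T ->
  hfinite_rank (fun x => x - T (Ts x)) ->
  [/\ (forall n : nat,
         0 <= ftrace ip (fun x => iter n Ts (iter n T (x - T (Ts x))))),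
      (forall n : nat,
         ftrace ip (fun x => iter n.+1 Ts (iter n.+1 T (x - T (Ts x))))
         <= ftrace ip (fun x => iter n Ts (iter n T (x - T (Ts x))))) &
      exists L : R,
        (fun n : nat =>
           complex.Re (ftrace ip (fun x => iter n Ts (iter n T (x - T (Ts x))))))
          @ \oo --> L
        /\
        (fun n : nat =>
           complex.Re (ftrace ip (fun x => x - iter n T (iter n Ts x))) / n%:R)
          @ \oo --> L].
Proof.
move=> [[h1 h2 h3 h4] _]; exact: (@main_sec R V ip h1 h2 h3 h4).
Qed.
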